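(* Let $\mathcal{G}$ be a second countable locally compact Hausdorff étale groupoid with the Fejér property, and let $\mathcal{H}$ be an open subgroupoid of $\mathcal{G}$. If $f\in C_r^*(\mathcal{G})$ satisfies $\operatorname{supp}(f)\subseteq\mathcal{H}$, then $f\in C_r^*(\mathcal{H})$.
   Context: $C_r^*(\mathcal{G})$ is the reduced groupoid $C^*$-algebra; each $f\in C_r^*(\mathcal{G})$ is regarded as a function in $C_0(\mathcal{G})$ via the injective map $j(f)(g)=\langle\delta_g,\pi_{s(g)}(f)\delta_{s(g)}\rangle$, and $\operatorname{supp}(f)=\{\gamma: j(f)(\gamma)\neq0\}$. For an open subgroupoid $\mathcal{H}$, $C_r^*(\mathcal{H})$ is identified with the closure of $C_c(\mathcal{H})$ in $C_r^*(\mathcal{G})$. $\mathcal{G}$ has the Fejér property if there is a net $(h_i)\subset C_c(\mathcal{G})$ with $\|h_if-f\|_r\to0$ for all $f\in C_r^*(\mathcal{G})$ (pointwise product). *)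

(* Defs.v *)
From HB Require Import structures.
From mathcomp Require Import all_boot all_order all_algebra.
From mathcomp Require Import all_classical all_reals all_analysis.
From mathcomp.real_closed Require Import complex.
Set Implicit Arguments. Unset Strict Implicit. Unset Printing Implicit Defensive.
Import Order.TTheory GRing.Theory Num.Theory.
Local Open Scope classical_set_scope.
Local Open Scope ring_scope.

(* Groupoid data on a carrier G: source, range, (partial) multiplication and
   inverse. Units are the points of the form [g_s g] (= unit space G^(0)). *)
Record groupoid_ops (G : Type) := GOps {
  g_s : G -> G; g_r : G -> G; g_mul : G -> G -> G; g_inv : G -> G }.

Definition is_groupoid (G : Type) (o : groupoid_ops G) : Prop :=
  let s := g_s o in let r := g_r o in let m := g_mul o in let i := g_inv o in
  [/\ (forall g, s (s g) = s g /\ r (s g) = s g /\ s (r g) = r g /\ r (r g) = r g),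
      (forall g h, s g = r h -> s (m g h) = s h /\ r (m g h) = r g),
      (forall g h k, s g = r h -> s h = r k -> m (m g h) k = m g (m h k)),
      (forall g, m (r g) g = g /\ m g (s g) = g) &
      (forall g, s (i g) = r g /\ r (i g) = s g /\
                 m g (i g) = r g /\ m (i g) g = s g)].

Definition is_topological_groupoid (G : topologicalType) (o : groupoid_ops G)
  : Prop :=
  [/\ is_groupoid o,
      {within [set p : G * G | g_s o p.1 = g_r o p.2],
         continuous (fun p : G * G => g_mul o p.1 p.2)},
      continuous (g_inv o), continuous (g_s o) & continuous (g_r o)].

Definition is_etale_groupoid (G : topologicalType) (o : groupoid_ops G) : Prop :=
  is_topological_groupoid o /\
  forall g : G, exists U : set G,
    [/\ open U, U g, {in U &, injective (g_r o)} &
        (forall V : set G, open V -> V `<=` U -> open (g_r o @` V))].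

Definition is_open_subgroupoid (G : topologicalType) (o : groupoid_ops G)
  (H : set G) : Prop :=
  [/\ open H,
      (forall g h, H g -> H h -> g_s o g = g_r o h -> H (g_mul o g h)) &
      (forall g, H g -> H (g_inv o g))].

Definition cnorm (R : realType) (z : R[i]) : R := ComplexField.Normc.normc z.

Definition Ccont (R : realType) (G : topologicalType) (f : G -> R[i]) : Prop :=
  forall (x : G) (e : R), 0 < e -> \forall y \near x, cnorm (f y - f x) < e.

Definition supp (R : realType) (G : Type) (f : G -> R[i]) : set G :=
  [set g | f g != 0].

Definition is_Cc (R : realType) (G : topologicalType) (f : G -> R[i]) : Prop :=
  Ccont f /\ compact (closure (supp f)).

(* C_c(H), H open, viewed inside C_c(G) by extension by zero *)
Definition is_Cc_in (R : realType) (G : topologicalType) (H : set G)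
  (f : G -> R[i]) : Prop :=
  is_Cc f /\ closure (supp f) `<=` H.

Definition fiber_seq (G : choiceType) (o : groupoid_ops G) (x : G) (bs : seq G)
  : Prop := uniq bs /\ (forall b, b \in bs -> g_s o b = x).

(* ||F||_r <= e, where ||F||_r = sup_x ||pi_x(F)||, computed through the matrix
   coefficients <delta_a, pi_x(F) delta_b> = F(a b^-1) (a, b in G_x) tested on
   finitely supported vectors of norm <= 1 of l^2(G_x). *)
Definition rnorm_le (R : realType) (G : choiceType) (o : groupoid_ops G)
  (F : G -> R[i]) (e : R) : Prop :=
  forall (x : G) (as_ bs : seq G) (d c : G -> R[i]),
    fiber_seq o x as_ -> fiber_seq o x bs ->
    \sum_(a <- as_) cnorm (d a) ^+ 2 <= 1 ->
    \sum_(b <- bs) cnorm (c b) ^+ 2 <= 1 ->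
    cnorm (\sum_(a <- as_) \sum_(b <- bs)
             conjc (d a) * F (g_mul o a (g_inv o b)) * c b) <= e.

(* F belongs to C_r^*(G) (as a function via j): F is a ||.||_r-limit of C_c(G) *)
Definition in_Cr (R : realType) (G : topologicalType) (o : groupoid_ops G)
  (F : G -> R[i]) : Prop :=
  forall e : R, 0 < e ->
    exists f : G -> R[i], is_Cc f /\ rnorm_le o (fun g => F g - f g) e.

(* F belongs to C_r^*(H) = closure of C_c(H) in C_r^*(G) *)
Definition in_Cr_sub (R : realType) (G : topologicalType) (o : groupoid_ops G)
  (H : set G) (F : G -> R[i]) : Prop :=
  forall e : R, 0 < e ->
    exists f : G -> R[i], is_Cc_in H f /\ rnorm_le o (fun g => F g - f g) e.

Definition directed (I : Type) (le : I -> I -> Prop) : Prop :=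
  [/\ (forall i, le i i), (forall i j k, le i j -> le j k -> le i k),
      inhabited I & (forall i j, exists k, le i k /\ le j k)].

Definition fejer (R : realType) (G : topologicalType) (o : groupoid_ops G)
  : Prop :=
  exists (I : Type) (le : I -> I -> Prop) (h : I -> G -> R[i]),
    [/\ directed le, (forall i, is_Cc (h i)) &
        (forall F : G -> R[i], in_Cr o F ->
           forall e : R, 0 < e -> exists i0, forall i, le i0 i ->
             rnorm_le o (fun g => h i g * F g - F g) e)].

(* Main.v *)
Require Import Defs.
From HB Require Import structures.
From mathcomp Require Import all_boot all_order all_algebra.
From mathcomp Require Import all_classical all_reals all_analysis.
From mathcomp.real_closed Require Import complex.
From mathcomp Require Import ring lra.
Import Order.TTheory GRing.Theory Num.Theory.
Local Open Scope classical_set_scope.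
Local Open Scope ring_scope.

Section C.
Context {R : realType}.
Implicit Types z w : R[i].
Lemma cnorm_ge0 z : 0 <= cnorm z.
Proof. by case: z => a b; rewrite /cnorm /= sqrtr_ge0. Qed.
Lemma cnormD z w : cnorm (z + w) <= cnorm z + cnorm w.
Proof. exact: (@le_normcD R z w). Qed.
Lemma cnormM z w : cnorm (z * w) = cnorm z * cnorm w.
Proof. exact: ComplexField.Normc.normcM. Qed.
Lemma cnormN z : cnorm (- z) = cnorm z.
Proof. exact: (@normcN R z). Qed.
Lemma cnorm0 : cnorm (0 : R[i]) = 0.
Proof. exact: ComplexField.Normc.normc0. Qed.
Lemma cnorm1 : cnorm (1 : R[i]) = 1.
Proof. exact: ComplexField.Normc.normc1. Qed.
Lemma cnorm_eq0 z : cnorm z = 0 -> z = 0.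
Proof. exact: ComplexField.Normc.eq0_normc. Qed.
Lemma cnormJ z : cnorm (conjc z) = cnorm z.
Proof. by case: z => a b; rewrite /cnorm /= sqrrN. Qed.
Lemma cnormR (x : R) : cnorm ((x%:C)%C) = `|x|.
Proof. by rewrite /cnorm /= expr0n /= addr0 sqrtr_sqr. Qed.
Lemma cnormB z w : cnorm (z - w) = cnorm (w - z).
Proof. by rewrite -cnormN opprB. Qed.
Lemma cnorm_sum (I : Type) (s : seq I) (f : I -> R[i]) :
  cnorm (\sum_(i <- s) f i) <= \sum_(i <- s) cnorm (f i).
Proof.
elim: s => [|a s IH]; first by rewrite !big_nil cnorm0.
rewrite !big_cons; apply: le_trans (cnormD _ _) _; exact: lerD.
Qed.
End C.
Section Alg.
Context {G : Type} {o : groupoid_ops G}.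
Hypothesis Hg : is_groupoid o.
Local Notation s := (g_s o). Local Notation r := (g_r o).
Local Notation m := (g_mul o). Local Notation i := (g_inv o).

Lemma gr_ss g : s (s g) = s g. Proof. by case: Hg => A1 _ _ _ _; case: (A1 g). Qed.
Lemma gr_rs g : r (s g) = s g. Proof. by case: Hg => A1 _ _ _ _; case: (A1 g) => _ []. Qed.
Lemma gr_sinv g : s (i g) = r g. Proof. by case: Hg => _ _ _ _ A5; case: (A5 g). Qed.
Lemma gr_rinv g : r (i g) = s g. Proof. by case: Hg => _ _ _ _ A5; case: (A5 g) => _ []. Qed.
Lemma gr_mulV g : m g (i g) = r g. Proof. by case: Hg => _ _ _ _ A5; case: (A5 g) => _ [_ []]. Qed.
Lemma gr_Vmul g : m (i g) g = s g. Proof. by case: Hg => _ _ _ _ A5; case: (A5 g) => _ [_ []]. Qed.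
Lemma gr_mul1 g : m (r g) g = g. Proof. by case: Hg => _ _ _ A4 _; case: (A4 g). Qed.
Lemma gr_mulr1 g : m g (s g) = g. Proof. by case: Hg => _ _ _ A4 _; case: (A4 g). Qed.
Lemma gr_assoc g h k : s g = r h -> s h = r k -> m (m g h) k = m g (m h k).
Proof. by case: Hg => _ _ A3 _ _; apply: A3. Qed.
Lemma gr_smul g h : s g = r h -> s (m g h) = s h.
Proof. by case: Hg => _ A2 _ _ _ E; case: (A2 g h E). Qed.
Lemma gr_rmul g h : s g = r h -> r (m g h) = r g.
Proof. by case: Hg => _ A2 _ _ _ E; case: (A2 g h E). Qed.

Lemma gr_inv_unit g : i (s g) = s g.
Proof.
have e1 : r (i (s g)) = s g by rewrite gr_rinv gr_ss.
by rewrite -[LHS]gr_mul1 e1 gr_mulV gr_rs.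
Qed.

Lemma gr_invK g : i (i g) = g.
Proof.
rewrite -[LHS]gr_mulr1 gr_sinv gr_rinv -gr_Vmul -gr_assoc.
- by rewrite gr_Vmul gr_sinv gr_mul1.
- by rewrite gr_sinv.
- by rewrite gr_sinv.
Qed.

Lemma gr_cancel_l a b b' : s a = s b -> s a = s b' ->
  m a (i b) = m a (i b') -> b = b'.
Proof.
move=> e1 e2 E.
have key c : s a = s c -> m (i a) (m a (i c)) = i c.
  move=> ec; rewrite -gr_assoc ?gr_sinv ?gr_rinv // gr_Vmul ec.
  by rewrite -gr_rinv gr_mul1.
by rewrite -[b]gr_invK -[b']gr_invK -(key _ e1) -(key _ e2) E.
Qed.

Lemma gr_cancel_r a a' b : s a = s b -> s a' = s b ->
  m a (i b) = m a' (i b) -> a = a'.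
Proof.
move=> e1 e2 E.
have key c : s c = s b -> m (m c (i b)) b = c.
  move=> ec; rewrite gr_assoc ?gr_sinv ?gr_rinv // gr_Vmul -ec gr_mulr1 //.
by rewrite -(key _ e1) -(key _ e2) E.
Qed.

Lemma gr_r_quot a b : s a = s b -> r (m a (i b)) = r a.
Proof. by move=> e; rewrite gr_rmul // gr_rinv. Qed.
Lemma gr_s_quot a b : s a = s b -> s (m a (i b)) = r b.
Proof. by move=> e; rewrite gr_smul ?gr_rinv // gr_sinv. Qed.
End Alg.

Lemma count_le1 (R : realType) (T : eqType) (P : T -> bool) (sq : seq T) :
  uniq sq -> (forall b b', b \in sq -> b' \in sq -> P b -> P b' -> b = b') ->
  \sum_(b <- sq) ((P b)%:R : R) <= 1.
Proof.
elim: sq => [|a sq IH]; first by rewrite big_nil.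
move=> /= /andP[anot usq] H.
rewrite big_cons; case Pa: (P a).
  rewrite big1_seq ?addr0 // => b /andP[_ bin]; case Pb: (P b) => //.
  have E := H a b (mem_head _ _) (_ : b \in a :: sq) Pa Pb.
  move: E; rewrite inE bin orbT => /(_ isT) E.
  by rewrite E bin in anot.
rewrite add0r; apply: IH => // b b' bin b'in; apply: H; by rewrite inE ?bin ?b'in orbT.
Qed.

Section Rn.
Context {R : realType} {G : choiceType} {o : groupoid_ops G}.

Lemma rnorm_mono (F : G -> R[i]) e e' : e <= e' -> rnorm_le o F e -> rnorm_le o F e'.
Proof. move=> le H x as_ bs d c h1 h2 h3 h4; exact: le_trans (H _ _ _ _ _ h1 h2 h3 h4) le. Qed.

Lemma rnorm_add (F1 F2 : G -> R[i]) e1 e2 :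
  rnorm_le o F1 e1 -> rnorm_le o F2 e2 -> rnorm_le o (fun g => F1 g + F2 g) (e1 + e2).
Proof.
move=> H1 H2 x as_ bs d c h1 h2 h3 h4.
have -> : (\sum_(a <- as_) \sum_(b <- bs) conjc (d a) * (F1 (g_mul o a (g_inv o b)) + F2 (g_mul o a (g_inv o b))) * c b) =
   (\sum_(a <- as_) \sum_(b <- bs) conjc (d a) * F1 (g_mul o a (g_inv o b)) * c b) +
   (\sum_(a <- as_) \sum_(b <- bs) conjc (d a) * F2 (g_mul o a (g_inv o b)) * c b).
  rewrite -big_split; apply: eq_bigr => a _; rewrite -big_split; apply: eq_bigr => b _.
  by rewrite mulrDr mulrDl.
apply: (le_trans (cnormD _ _)); apply: lerD; [exact: (H1 x as_ bs d c h1 h2 h3 h4)|exact: (H2 x as_ bs d c h1 h2 h3 h4)].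
Qed.

Lemma rnorm_opp (F : G -> R[i]) e : rnorm_le o F e -> rnorm_le o (fun g => - F g) e.
Proof.
move=> H x as_ bs d c h1 h2 h3 h4.
have -> : (\sum_(a <- as_) \sum_(b <- bs) conjc (d a) * (- F (g_mul o a (g_inv o b))) * c b) =
   - (\sum_(a <- as_) \sum_(b <- bs) conjc (d a) * F (g_mul o a (g_inv o b)) * c b).
  rewrite -sumrN; apply: eq_bigr => a _; rewrite -sumrN; apply: eq_bigr => b _.
  by rewrite mulrN mulNr.
rewrite cnormN; exact: (H x as_ bs d c h1 h2 h3 h4).
Qed.

Lemma rnorm_ext (F F' : G -> R[i]) e : (forall g, F g = F' g) -> rnorm_le o F e -> rnorm_le o F' e.
Proof. by move=> E; have -> : F' = F by apply: funext => g; rewrite E. Qed.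

Hypothesis Hg : is_groupoid o.

Lemma rnorm_sup (F : G -> R[i]) e : rnorm_le o F e -> forall g, cnorm (F g) <= e.
Proof.
move=> H g.
have := H (g_s o g) [:: g] [:: g_s o g] (fun _ => 1) (fun _ => 1).
rewrite !big_cons !big_nil !addr0 cnorm1 expr1n.
rewrite -{2}(gr_ss Hg g) (gr_inv_unit Hg) (gr_mulr1 Hg).
have -> : conjc (1 : R[i]) = 1 by exact: conjc1.
rewrite mul1r mulr1; apply.
- by split=> // b; rewrite inE => /eqP ->.
- by split=> // b; rewrite inE => /eqP ->; rewrite (gr_ss Hg).
- by [].
- by [].
Qed.

Lemma rnorm_bis (U : set G) (D : G -> R[i]) M :
  {in U &, injective (g_r o)} -> {in U &, injective (g_s o)} ->
  (forall g, D g != 0 -> U g) -> 0 <= M -> (forall g, cnorm (D g) <= M) ->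
  rnorm_le o D M.
Proof.
move=> ir is_ DU M0 DM x as_ bs d c [ua sa] [ub sb] hd hc.
pose P a b := `[< U (g_mul o a (g_inv o b)) >].
pose X a := cnorm (d a). pose Y b := cnorm (c b).
have step a b : cnorm (conjc (d a) * D (g_mul o a (g_inv o b)) * c b) <=
    (P a b)%:R * (M / 2 * (X a ^+ 2 + Y b ^+ 2)).
  have [D0|Dn0] := eqVneq (D (g_mul o a (g_inv o b))) 0.
    rewrite D0 mulr0 mul0r cnorm0 mulr_ge0 // ?ler0n // mulr_ge0 ?divr_ge0 //.
    by rewrite addr_ge0 // sqr_ge0.
  have -> : P a b = true by apply/asboolP; exact: DU.
  rewrite mul1r !cnormM cnormJ -/(X a) -/(Y b).
  have hX : 0 <= X a by exact: cnorm_ge0.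
  have hY : 0 <= Y b by exact: cnorm_ge0.
  have h2 : X a * Y b <= (X a ^+ 2 + Y b ^+ 2) / 2.
    rewrite ler_pdivlMr // ; have := sqr_ge0 (X a - Y b); rewrite sqrrB.
    move=> h; rewrite -subr_ge0; apply: le_trans h _; rewrite le_eqVlt; apply/orP; left.
    by apply/eqP; rewrite mulr_natr; ring.
  apply: le_trans (_ : M * (X a * Y b) <= _).
    rewrite mulrA [M * X a]mulrC; apply: ler_pM => //.
    - by rewrite mulr_ge0 // cnorm_ge0.
    - by apply: ler_wpM2l => //; apply: DM.
  by rewrite -mulrA; apply: ler_wpM2l => //; rewrite [_^-1 * _]mulrC.
apply: le_trans (cnorm_sum _ _ _) _.
apply: le_trans (_ : \sum_(a <- as_) \sum_(b <- bs) (P a b)%:R * (M / 2 * (X a ^+ 2 + Y b ^+ 2)) <= _).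
  apply: ler_sum => a _; apply: le_trans (cnorm_sum _ _ _) _; apply: ler_sum => b _; exact: step.
have cntb a : a \in as_ -> \sum_(b <- bs) ((P a b)%:R : R) <= 1.
  move=> ain; apply: count_le1 => // b b' bin b'in /asboolP Pb /asboolP Pb'.
  have e1 : g_s o a = g_s o b by rewrite sa // sb.
  have e2 : g_s o a = g_s o b' by rewrite sa // sb.
  apply: (gr_cancel_l Hg _ _ _ e1 e2); apply: ir; rewrite ?inE //.
  by rewrite !(gr_r_quot Hg).
have cnta b : b \in bs -> \sum_(a <- as_) ((P a b)%:R : R) <= 1.
  move=> bin; apply: count_le1 => // a a' ain a'in /asboolP Pa /asboolP Pa'.
  have e1 : g_s o a = g_s o b by rewrite sa // sb.
  have e2 : g_s o a' = g_s o b by rewrite sa // sb.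
  apply: (gr_cancel_r Hg _ _ _ e1 e2); apply: is_; rewrite ?inE //.
  by rewrite !(gr_s_quot Hg).
have -> : \sum_(a <- as_) \sum_(b <- bs) (P a b)%:R * (M / 2 * (X a ^+ 2 + Y b ^+ 2)) =
   M / 2 * (\sum_(a <- as_) X a ^+ 2 * \sum_(b <- bs) (P a b)%:R +
            \sum_(b <- bs) Y b ^+ 2 * \sum_(a <- as_) (P a b)%:R).
  rewrite mulrDr.
  have E1 : M / 2 * (\sum_(a <- as_) X a ^+ 2 * \sum_(b <- bs) ((P a b)%:R : R)) =
     \sum_(a <- as_) \sum_(b <- bs) (P a b)%:R * (M / 2 * X a ^+ 2).
    rewrite mulr_sumr; apply: eq_bigr => a _; rewrite mulrA mulr_sumr; apply: eq_bigr => b _; ring.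
  have E2 : M / 2 * (\sum_(b <- bs) Y b ^+ 2 * \sum_(a <- as_) ((P a b)%:R : R)) =
     \sum_(a <- as_) \sum_(b <- bs) (P a b)%:R * (M / 2 * Y b ^+ 2).
    rewrite [RHS]exchange_big /= mulr_sumr; apply: eq_bigr => b _.
    rewrite mulrA mulr_sumr; apply: eq_bigr => a _; ring.
  rewrite E1 E2 -big_split; apply: eq_bigr => a _; rewrite -big_split; apply: eq_bigr => b _ /=; ring.
have A1 : \sum_(a <- as_) X a ^+ 2 * \sum_(b <- bs) ((P a b)%:R : R) <= 1.
  apply: le_trans hd; rewrite big_seq [leRHS]big_seq; apply: ler_sum => a ain.
  rewrite -[leRHS]mulr1; apply: ler_wpM2l; [exact: sqr_ge0|exact: cntb].
have A2 : \sum_(b <- bs) Y b ^+ 2 * \sum_(a <- as_) ((P a b)%:R : R) <= 1.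
  apply: le_trans hc; rewrite big_seq [leRHS]big_seq; apply: ler_sum => b bin.
  rewrite -[leRHS]mulr1; apply: ler_wpM2l; [exact: sqr_ge0|exact: cnta].
move: A1 A2; set A := \sum_(a <- as_) _; set B := \sum_(b <- bs) _ => A1 A2.
nra.
Qed.
End Rn.
Arguments rnorm_mono {R G o F e e'}.
Arguments rnorm_add {R G o F1 F2 e1 e2}.
Arguments rnorm_opp {R G o F e}.
Arguments rnorm_ext {R G o F F' e}.
Arguments rnorm_sup {R G o} Hg {F e}.

Section Cont.
Context {R : realType} {G : topologicalType}.

Lemma cnorm_dist (u v : R[i]) : `|cnorm u - cnorm v| <= cnorm (u - v).
Proof.
have h1 := cnormD (u - v) v. have h2 := cnormD (v - u) u.
rewrite subrK in h1; rewrite subrK cnormB in h2.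
rewrite ler_norml; apply/andP; split; lra.
Qed.

Lemma Ccont_unif (F : G -> R[i]) :
  (forall e : R, 0 < e -> exists f, Ccont f /\ forall g, cnorm (F g - f g) <= e) ->
  Ccont F.
Proof.
move=> H x e e0; have e3 : 0 < e / 3 by rewrite divr_gt0.
case: (H _ e3) => f [fc fb].
apply: filterS (fc x _ e3) => y hy.
have -> : F y - F x = (F y - f y) + (f y - f x) + (f x - F x) by ring.
have h1 := cnormD (F y - f y + (f y - f x)) (f x - F x).
have h2 := cnormD (F y - f y) (f y - f x).
have h3 := fb y; have h4 := fb x; rewrite cnormB in h4.
lra.
Qed.

Lemma Ccont_mul (f g : G -> R[i]) : Ccont f -> Ccont g -> Ccont (fun y => f y * g y).
Proof.
move=> fc gc x e e0.
set A := cnorm (f x) + 1. set B := cnorm (g x) + 1.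
have A0 : 0 < A by rewrite /A ltr_wpDl ?cnorm_ge0.
have B0 : 0 < B by rewrite /B ltr_wpDl ?cnorm_ge0.
have a0 : 0 < e / (3 * A) by rewrite divr_gt0 // mulr_gt0.
have b0 : 0 < e / (3 * B) by rewrite divr_gt0 // mulr_gt0.
apply: (@filterS3 _ _ _ _ _ _ _ _ (fc x _ ltr01) (fc x _ b0) (gc x _ a0)) => y h1 h2 h3.
have -> : f y * g y - f x * g x = f y * (g y - g x) + (f y - f x) * g x by ring.
apply: le_lt_trans (cnormD _ _) _; rewrite !cnormM.
have fy : cnorm (f y) <= A.
  have := cnormD (f y - f x) (f x); rewrite subrK /A; lra.
have t1 : cnorm (f y) * cnorm (g y - g x) <= A * (e / (3 * A)).
  by apply: ler_pM; rewrite ?cnorm_ge0 // ltW.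
have t2 : cnorm (f y - f x) * cnorm (g x) <= (e / (3 * B)) * B.
  apply: ler_pM; rewrite ?cnorm_ge0 // ?ltW // /B; lra.
have E1 : A * (e / (3 * A)) = e / 3 by field; rewrite gt_eqF.
have E2 : (e / (3 * B)) * B = e / 3 by field; rewrite gt_eqF.
lra.
Qed.

Lemma Ccont_lift (k : G -> R[i]) (phi : R -> R) (L : R) : 0 < L ->
  (forall t u, `|phi t - phi u| <= L * `|t - u|) ->
  Ccont k -> Ccont (fun y => ((phi (cnorm (k y)))%:C)%C).
Proof.
move=> L0 Lip kc x e e0; have eL : 0 < e / L by rewrite divr_gt0.
apply: filterS (kc x _ eL) => y hy.
rewrite -rmorphB cnormR; apply: le_lt_trans (Lip _ _) _.
apply: le_lt_trans (_ : L * cnorm (k y - k x) < _).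
  by apply: ler_wpM2l; [exact: ltW|exact: cnorm_dist].
by rewrite -ltr_pdivlMl // mulrC.
Qed.
End Cont.

Definition clamp {R : realType} (t : R) : R := if t <= 0 then 0 else if t <= 1 then t else 1.

Lemma clamp_lip (R : realType) (t u : R) : `|clamp t - clamp u| <= `|t - u|.
Proof.
have n1 : t - u <= `|t - u| by exact: ler_norm.
have n2 : - (t - u) <= `|t - u| by rewrite -normrN ler_norm.
rewrite ler_norml /clamp; apply/andP.
by case: (leP t 0) => h1; case: (leP t 1) => h2; case: (leP u 0) => h3;
  case: (leP u 1) => h4; split; lra.
Qed.

Lemma clamp_ge0 (R : realType) (t : R) : 0 <= clamp t.
Proof. rewrite /clamp; case: (leP t 0) => h1 //; case: (leP t 1) => h2 //; lra. Qed.
Lemma clamp_le1 (R : realType) (t : R) : clamp t <= 1.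
Proof. rewrite /clamp; case: (leP t 0) => h1 //; case: (leP t 1) => h2 //. Qed.
Lemma clamp_1 (R : realType) (t : R) : 1 <= t -> clamp t = 1.
Proof. rewrite /clamp => h; case: (leP t 0) => h1; first lra. case: (leP t 1) => h2 //; lra. Qed.
Lemma clamp_pos (R : realType) (t : R) : clamp t != 0 -> 0 < t.
Proof. rewrite /clamp; case: (leP t 0) => h1 //; by rewrite eqxx. Qed.
Arguments Ccont_mul {R G f g}.
Arguments Ccont_unif {R G F}.
Arguments Ccont_lift {R G k phi L}.
Arguments clamp_lip {R}.
Arguments clamp_ge0 {R}.
Arguments clamp_le1 {R}.
Arguments clamp_1 {R t}.
Arguments clamp_pos {R t}.

Definition ptG {T : topologicalType} (x : T) : Type := T.
HB.instance Definition _ (T : topologicalType) (x : T) := Topological.copy (ptG x) T.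
HB.instance Definition _ (T : topologicalType) (x : T) := isPointed.Build (ptG x) x.
Lemma compact_cover_np (T : topologicalType) (K : set T) (x : T) :
  compact K -> cover_compact K.
Proof.
move=> cK; have cK' : @compact (ptG x) K := cK.
by have := cK'; rewrite compact_cover.
Qed.

Section Cov.
Context {G : topologicalType} {o : groupoid_ops G}.

Lemma bisection_choice : is_etale_groupoid o -> exists Uf : G -> set G,
  forall g, [/\ open (Uf g), Uf g g, {in Uf g &, injective (g_r o)} &
     {in Uf g &, injective (g_s o)}].
Proof.
move=> [[Hgr _ Hinv _ _] Het].
have H g : exists U : set G, [/\ open U, U g, {in U &, injective (g_r o)} &
     {in U &, injective (g_s o)}].
  case: (Het g) => U1 [op1 g1 i1 _]; case: (Het (g_inv o g)) => U2 [op2 g2 i2 _].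
  exists (U1 `&` (g_inv o @^-1` U2)); split.
  - apply: openI => //; apply: open_comp => // y _; exact: Hinv.
  - by split.
  - move=> a b /set_mem [ua _] /set_mem [ub _] e; apply: i1 => //; exact: mem_set.
  - move=> a b /set_mem [_ ua] /set_mem [_ ub] e.
    have : g_inv o a = g_inv o b.
      apply: i2; [exact: mem_set|exact: mem_set|by rewrite !(gr_rinv Hgr)].
    by move/(congr1 (g_inv o)); rewrite !(gr_invK Hgr).
case: (choice H) => Uf HUf; by exists Uf.
Qed.

Lemma cover_list (Uf : G -> set G) (K : set G) :
  (forall g, open (Uf g)) -> (forall g, Uf g g) -> compact K ->
  exists gs : seq G, forall y, K y -> exists2 g, g \in gs & Uf g y.
Proof.
move=> Uo Ug cK0.
have [[y0 Ky0]|K0] := pselect (exists y, K y); last first.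
  by exists [::] => y Ky; exfalso; apply: K0; exists y.
have cK := @compact_cover_np G K y0 cK0.
case: (cK G setT Uf) => [g _|y Ky|D' _ HD']; first exact: Uo.
  by exists y.
exists (finmap.enum_fset D') => y /HD' [g Dg Ugy]; by exists g.
Qed.
End Cov.

Section List.
Context {R : realType} {G : choiceType} {o : groupoid_ops G}.
Hypothesis Hg : is_groupoid o.
Variable Uf : G -> set G.
Hypothesis HUf : forall g, {in Uf g &, injective (g_r o)} /\ {in Uf g &, injective (g_s o)}.

Lemma rnorm_list (gs : seq G) : forall (D : G -> R[i]) (M : R), 0 <= M ->
  (forall g, cnorm (D g) <= M) ->
  (forall y, D y != 0 -> exists2 g, g \in gs & Uf g y) ->
  rnorm_le o D (M * (size gs)%:R).
Proof.
elim: gs => [|g0 gs IH] D M M0 DM Dc.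
  rewrite mulr0; apply: (@rnorm_bis _ _ _ Hg set0).
  - by move=> a b /set_mem.
  - by move=> a b /set_mem.
  - by move=> g /Dc [].
  - by [].
  - move=> g; have [->|/Dc []] := eqVneq (D g) 0; first by rewrite cnorm0.
    by [].
pose D1 := fun y => if `[< Uf g0 y >] then D y else 0.
pose D2 := fun y => if `[< Uf g0 y >] then 0 else D y.
have h1 : rnorm_le o D1 M.
  case: (HUf g0) => ir is_.
  apply: (@rnorm_bis _ _ _ Hg (Uf g0) D1 M ir is_) => //.
  - by move=> y; rewrite /D1; case: asboolP => // _; rewrite eqxx.
  - by move=> y; rewrite /D1; case: asboolP => _ //; rewrite cnorm0.
have h2 : rnorm_le o D2 (M * (size gs)%:R).
  apply: IH => //.
  - by move=> y; rewrite /D2; case: asboolP => _ //; rewrite cnorm0.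
  - move=> y; rewrite /D2; case: asboolP => nU //; first by rewrite eqxx.
    move=> /Dc [g]; rewrite inE => /orP[/eqP ->|gin] Uy; first by [].
    by exists g.
apply: (@rnorm_ext _ _ _ (fun y => D1 y + D2 y) D).
  by move=> y; rewrite /D1 /D2; case: asboolP => _; rewrite ?addr0 ?add0r.
apply: (rnorm_mono _ (rnorm_add h1 h2)).
by rewrite /= -add1n natrD mulrDr mulr1.
Qed.
End List.

Theorem mainTheorem8 (R : realType) (G : topologicalType) (o : groupoid_ops G) :
  is_etale_groupoid o -> hausdorff_space G -> locally_compact [set: G] ->
  @second_countable G -> fejer R o ->
  forall H : set G, is_open_subgroupoid o H ->
  forall F : G -> R[i], in_Cr o F -> supp F `<=` H -> in_Cr_sub o H F.
Proof.
move=> Het _ _ _ [I [le [h [[lerefl _ _ _] Hcc Hfej]]]] H _ F HF HsF e e0.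
have Hg : is_groupoid o by case: Het => [[]].
have Fc : Ccont F.
  apply: Ccont_unif => e' e'0; case: (HF e' e'0) => f [[fc _] fb]; exists f; split => // g.
  exact: (rnorm_sup Hg fb).
have e2 : 0 < e / 2 by rewrite divr_gt0.
case: (Hfej F HF _ e2) => i0 Hi0; have Hfe := Hi0 i0 (lerefl i0).
case: (Hcc i0) => hc hK.
pose k y := h i0 y * F y.
have kc : Ccont k := Ccont_mul hc Fc.
case: (bisection_choice Het) => Uf HUf.
have [gs Hgs] : exists gs : seq G, forall y, closure (supp (h i0)) y -> exists2 g, g \in gs & Uf g y.
  by apply: cover_list hK => g; case: (HUf g).
pose N : R := (size gs)%:R.
have N0 : 0 <= N by rewrite ler0n.
pose d := e / (4 * (N + 1)).
have d0 : 0 < d by rewrite divr_gt0 // mulr_gt0 // ltr_wpDl.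
have Ed : d * (4 * (N + 1)) = e by rewrite /d; field; rewrite gt_eqF // ltr_wpDl.
pose c y := clamp (cnorm (k y) / d - 1).
pose f y := k y * ((c y)%:C)%C.
have f0k y : f y != 0 -> k y != 0.
  by apply: contra_neq => ky; rewrite /f ky mul0r.
have k0h y : k y != 0 -> h i0 y != 0.
  by apply: contra_neq => hy; rewrite /k hy mul0r.
have k0F y : k y != 0 -> F y != 0.
  by apply: contra_neq => hy; rewrite /k hy mulr0.
have fcl y : closure (supp f) y -> d <= cnorm (k y).
  move=> cly; rewrite leNgt; apply/negP => hlt.
  have eta0 : 0 < d - cnorm (k y) by rewrite subr_gt0.
  case: (cly _ (kc y _ eta0)) => z [fz Bz].
  have cz : c z != 0 by apply/eqP => cz0; move: fz; rewrite /supp /= /f cz0 mulr0 eqxx.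
  have := clamp_pos cz; rewrite subr_gt0 ltr_pdivlMr // mul1r => hz.
  have := cnormD (k z - k y) (k y); rewrite subrK; lra.
exists f; split; [split; [split|]|].
- apply: (Ccont_mul kc).
  apply: (Ccont_lift (phi := fun t => clamp (t / d - 1)) (L := d^-1)); first by rewrite invr_gt0.
  move=> t u; apply: le_trans (clamp_lip _ _) _.
  rewrite (_ : t / d - 1 - (u / d - 1) = d^-1 * (t - u)); last by ring.
  by rewrite normrM gtr0_norm // invr_gt0.
  exact: kc.
- apply: (subclosed_compact _ hK); first exact: closed_closure.
  apply: closureS => y /= fy.
  exact: k0h (f0k _ fy).
- move=> y /fcl hy; apply: HsF; apply: k0F.
  by apply/eqP => ky; rewrite ky cnorm0 in hy; lra.
- have Dn : rnorm_le o (fun y => k y - f y) (2 * d * N).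
    apply: (@rnorm_list _ _ _ Hg Uf).
    + by move=> g; case: (HUf g).
    + by rewrite mulr_ge0 // ltW.
    + move=> y.
      have -> : k y - f y = k y * ((1 - c y)%:C)%C by rewrite /f rmorphB rmorph1 /=; ring.
      rewrite cnormM cnormR ger0_norm ?subr_ge0 ?clamp_le1 //.
      have hk := cnorm_ge0 (k y).
      have c1 := clamp_le1 (cnorm (k y) / d - 1); have c0 := clamp_ge0 (cnorm (k y) / d - 1).
      have [hbig|hsmall] := leP (2 * d) (cnorm (k y)).
        have -> : c y = 1.
          by apply: clamp_1; rewrite lerBrDr ler_pdivlMr //; lra.
        by rewrite subrr mulr0 mulr_ge0 // ltW.
      rewrite -/(c y) in c1 c0; nra.
    + move=> y hy; apply: Hgs; apply: subset_closure; rewrite /supp /=.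
      apply: k0h; apply/eqP => ky; move: hy; rewrite ky.
      by rewrite /f ky mul0r subrr eqxx.
  have Fn := rnorm_opp Hfe.
  apply: rnorm_ext (rnorm_mono _ (rnorm_add Fn Dn)).
    by move=> g; rewrite /k; ring.
  nra.
Qed.
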